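(* Let $a,b,c,d,e,f,g,h\in\mathbb{C}$ and let $$R=\begin{pmatrix} a&0&0&b\\ 0&c&d&0\\ 0&e&f&0\\ g&0&0&h\end{pmatrix}$$ act on $\mathbb{C}^2\otimes\mathbb{C}^2$ in the computational basis $|00\rangle,|01\rangle,|10\rangle,|11\rangle$. Suppose $R$ is unitary, satisfies the braided Yang–Baxter equation $(R\otimes I)(I\otimes R)(R\otimes I)=(I\otimes R)(R\otimes I)(I\otimes R)$ ($I$ the $2\times 2$ identity), and is entangling. Then $R$ is of one of the following four forms: 1. $R=\begin{pmatrix} a&0&0&0\\ 0&0&d&0\\ 0&e&0&0\\ 0&0&0&h\end{pmatrix}$ with $|a|=|d|=|e|=|h|=1$; a matrix of this form is a unitary solution of the Yang–Baxter equation, and it is entangling if and only if $ah\neq de$. 2. $R=\begin{pmatrix} 0&0&0&b\\ 0&c&0&0\\ 0&0&c&0\\ g&0&0&0\end{pmatrix}$ with $|b|=|c|=|g|=1$; a matrix of this form is a unitary solution of the Yang–Baxter equation, and it is entangling if and only if $bg\neq c^2$. 3. $R=\begin{pmatrix} a&0&0&b\\ 0&a&\pm a&0\\ 0&\mp a&a&0\\ g&0&0&a\end{pmatrix}$ (with the signs in positions $(2,3)$ and $(3,2)$ opposite) where $bg=-a^2$ and $|a|=|b|=|g|=\tfrac{1}{\sqrt2}$; such $R$ is always entangling. 4. $R=\begin{pmatrix} a&0&0&b\\ 0&c&d&0\\ 0&d&c&0\\ g&0&0&h\end{pmatrix}$ with $a,b,c,d,g,h$ all nonzero and satisfying $a^2-d^2=d^2-h^2=ac-hc$,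 $a^2+h^2=2d^2$, $bg=c^2$, together with $a\bar a+b\bar b=1$, $c\bar c+d\bar d=1$, $g\bar g+h\bar h=1$, $a\bar g+b\bar h=0$, $c\bar d+d\bar c=0$; such $R$ is always entangling.
   Context: A two-qubit state $|\Phi\rangle\in\mathbb{C}^2\otimes\mathbb{C}^2$ is un-entangled if it can be written as a tensor product $u\otimes v$ of two vectors in $\mathbb{C}^2$, and entangled otherwise. A $4\times4$ matrix $R$ is called entangling if there exists an un-entangled state $|\Phi\rangle$ such that $R|\Phi\rangle$ is entangled. Unitary means $R^{-1}=R^{\dagger}$ (conjugate transpose). *)

(* Defs.v *)
(* The complex field C is modelled as R[i] (complex numbers
   over R, mathcomp-real-closed) for an arbitrary realType R (a model of the
   real numbers; every realType is isomorphic to the reals). *)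
From HB Require Import structures.
From mathcomp Require Import all_boot all_order all_algebra.
From mathcomp Require Import reals.
From mathcomp Require Export complex mxtens.
Set Implicit Arguments. Unset Strict Implicit. Unset Printing Implicit Defensive.
Import Order.TTheory GRing.Theory Num.Theory.
Local Open Scope ring_scope.

Section Defs.
Variable R : realType.
Local Notation C := R[i].

Definition adjmx {m n} (A : 'M[C]_(m, n)) : 'M[C]_(n, m) :=
  (map_mx Num.conj A)^T.

Definition unitary {n} (A : 'M[C]_n) : Prop :=
  A \in unitmx /\ invmx A = adjmx A.

(* 4x4 matrix from its rows (computational basis |00>,|01>,|10>,|11>) *)
Definition mx4 (r0 r1 r2 r3 : seq C) : 'M[C]_4 :=
  \matrix_(i < 4, j < 4) nth 0 (nth [::] [:: r0; r1; r2; r3] i) j.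

Definition I2 : 'M[C]_2 := 1%:M.

(* R (x) I and I (x) R as 8x8 matrices (Kronecker product, index i*n+j) *)
Definition RI (A : 'M[C]_4) : 'M[C]_8 := A *t I2.
Definition IR (A : 'M[C]_4) : 'M[C]_8 := I2 *t A.

Definition braided_YBE (A : 'M[C]_4) : Prop :=
  RI A *m IR A *m RI A = IR A *m RI A *m IR A.

Definition unentangled (Phi : 'cV[C]_4) : Prop :=
  exists u v : 'cV[C]_2, Phi = u *t v.

Definition entangled (Phi : 'cV[C]_4) : Prop := ~ unentangled Phi.

Definition entangling (A : 'M[C]_4) : Prop :=
  exists Phi : 'cV[C]_4, unentangled Phi /\ entangled (A *m Phi).

End Defs.

(* Main.v *)
Require Import Defs.
From HB Require Import structures.
From mathcomp Require Import all_boot all_order all_algebra.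
From mathcomp Require Import reals complex mxtens.
From mathcomp Require Import ring.
Import Order.TTheory GRing.Theory Num.Theory.
Local Open Scope ring_scope.

Section S.
Variable R : realType.
Local Notation C := R[i].
Definition fn (r : seq (seq C)) (i j : nat) : C := nth 0 (nth [::] r i) j.
Definition S8 (u : nat -> C) := u 0%N + u 1%N + u 2%N + u 3%N + u 4%N + u 5%N + u 6%N + u 7%N.

Definition RIr (a b c d e f g h : C) := [:: [:: a;0;0;0;0;0;b;0]; [:: 0;a;0;0;0;0;0;b];
          [:: 0;0;c;0;d;0;0;0]; [:: 0;0;0;c;0;d;0;0];
          [:: 0;0;e;0;f;0;0;0]; [:: 0;0;0;e;0;f;0;0];
          [:: g;0;0;0;0;0;h;0]; [:: 0;g;0;0;0;0;0;h]].
Definition IRr (a b c d e f g h : C) := [:: [:: a;0;0;b;0;0;0;0]; [:: 0;c;d;0;0;0;0;0];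
          [:: 0;e;f;0;0;0;0;0]; [:: g;0;0;h;0;0;0;0];
          [:: 0;0;0;0;a;0;0;b]; [:: 0;0;0;0;0;c;d;0];
          [:: 0;0;0;0;0;e;f;0]; [:: 0;0;0;0;g;0;0;h]].

Lemma RI_eq (a b c d e f g h : C) :
  RI (mx4 [:: a; 0; 0; b] [:: 0; c; d; 0] [:: 0; e; f; 0] [:: g; 0; 0; h]) =
  \matrix_(i < 8, j < 8) fn (RIr a b c d e f g h) i j.
Proof.
apply/matrixP => i j; rewrite !mxE /fn /=.
case: i => [[|[|[|[|[|[|[|[|//]]]]]]]] Hi];
case: j => [[|[|[|[|[|[|[|[|//]]]]]]]] Hj]; rewrite /divn /modn /= ?mulr1 ?mulr0 //.
Qed.
Lemma IR_eq (a b c d e f g h : C) :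
  IR (mx4 [:: a; 0; 0; b] [:: 0; c; d; 0] [:: 0; e; f; 0] [:: g; 0; 0; h]) =
  \matrix_(i < 8, j < 8) fn (IRr a b c d e f g h) i j.
Proof.
apply/matrixP => i j; rewrite !mxE /fn /=.
case: i => [[|[|[|[|[|[|[|[|//]]]]]]]] Hi];
case: j => [[|[|[|[|[|[|[|[|//]]]]]]]] Hj]; rewrite /divn /modn /= ?mul1r ?mul0r //.
Qed.

Lemma sum8 (u : 'I_8 -> C) : \sum_(k < 8) u k = S8 (fun k => u (inord k)).
Proof.
rewrite /S8 !big_ord_recl big_ord0 addr0 !addrA; congr (_ + _ + _ + _ + _ + _ + _ + _);
  congr u; apply: val_inj; rewrite /= inordK //.
Qed.

Lemma tri (F G : nat -> nat -> C) (p q : 'I_8) :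
  ((\matrix_(i < 8, j < 8) F i j) *m (\matrix_(i < 8, j < 8) G i j) *m (\matrix_(i < 8, j < 8) F i j)) p q
  = S8 (fun k => S8 (fun l => F p l * G l k) * F k q).
Proof.
rewrite mxE sum8 /S8 !mxE !sum8 /S8 !mxE !inordK //.
Qed.

Lemma eq_sub0 (x y P : C) : x = y -> P = x - y -> P = 0.
Proof. by move=> -> ->; rewrite subrr. Qed.

Lemma ybe_entry (a b c d e f g h : C) (p q : 'I_8) :
  braided_YBE (mx4 [:: a; 0; 0; b] [:: 0; c; d; 0] [:: 0; e; f; 0] [:: g; 0; 0; h]) ->
  S8 (fun k => S8 (fun l => fn (RIr a b c d e f g h) p l * fn (IRr a b c d e f g h) l k) * fn (RIr a b c d e f g h) k q) =
  S8 (fun k => S8 (fun l => fn (IRr a b c d e f g h) p l * fn (RIr a b c d e f g h) l k) * fn (IRr a b c d e f g h) k q).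
Proof.
rewrite /braided_YBE RI_eq IR_eq => H.
by rewrite -!tri H.
Qed.


Definition M4 (a b c d e f g h : C) :=
  mx4 [:: a; 0; 0; b] [:: 0; c; d; 0] [:: 0; e; f; 0] [:: g; 0; 0; h].

Lemma ybe_eqs (a b c d e f g h : C) :
  braided_YBE (M4 a b c d e f g h) ->
  (b * f * g - b * c * g = 0 /\
      b * e ^+ 2 - b * c * h + a * b * c - a ^+ 2 * b = 0 /\
      - (c * d * e) + b * g * h - a * c ^+ 2 + a ^+ 2 * c = 0 /\
      - (c * d * f) + b * e * g = 0 /\
      b * h ^+ 2 - b * d ^+ 2 - b * c * h + a * b * c = 0 /\
      - (c * e * f) + b * d * g = 0 /\
      - (c * f ^+ 2) + c ^+ 2 * f = 0 /\
      - (c * h ^+ 2) + c * d * e + c ^+ 2 * h - a * b * g = 0).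
Proof.
move=> H; do !split.
- move: (@ybe_entry a b c d e f g h (@Ordinal 8 0 isT) (@Ordinal 8 0 isT) H).
  rewrite /S8 /fn /= => E; apply: (eq_sub0 _ _ _ E); ring.
- move: (@ybe_entry a b c d e f g h (@Ordinal 8 0 isT) (@Ordinal 8 3 isT) H).
  rewrite /S8 /fn /= => E; apply: (eq_sub0 _ _ _ E); ring.
- move: (@ybe_entry a b c d e f g h (@Ordinal 8 1 isT) (@Ordinal 8 1 isT) H).
  rewrite /S8 /fn /= => E; apply: (eq_sub0 _ _ _ E); ring.
- move: (@ybe_entry a b c d e f g h (@Ordinal 8 1 isT) (@Ordinal 8 2 isT) H).
  rewrite /S8 /fn /= => E; apply: (eq_sub0 _ _ _ E); ring.
- move: (@ybe_entry a b c d e f g h (@Ordinal 8 1 isT) (@Ordinal 8 7 isT) H).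
  rewrite /S8 /fn /= => E; apply: (eq_sub0 _ _ _ E); ring.
- move: (@ybe_entry a b c d e f g h (@Ordinal 8 2 isT) (@Ordinal 8 1 isT) H).
  rewrite /S8 /fn /= => E; apply: (eq_sub0 _ _ _ E); ring.
- move: (@ybe_entry a b c d e f g h (@Ordinal 8 2 isT) (@Ordinal 8 2 isT) H).
  rewrite /S8 /fn /= => E; apply: (eq_sub0 _ _ _ E); ring.
- move: (@ybe_entry a b c d e f g h (@Ordinal 8 3 isT) (@Ordinal 8 3 isT) H).
  rewrite /S8 /fn /= => E; apply: (eq_sub0 _ _ _ E); ring.
Qed.

Lemma ybe_conv (a b c d e f g h : C) :
  (forall p q : 'I_8,
  S8 (fun k => S8 (fun l => fn (RIr a b c d e f g h) p l * fn (IRr a b c d e f g h) l k) * fn (RIr a b c d e f g h) k q) =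
  S8 (fun k => S8 (fun l => fn (IRr a b c d e f g h) p l * fn (RIr a b c d e f g h) l k) * fn (IRr a b c d e f g h) k q)) ->
  braided_YBE (M4 a b c d e f g h).
Proof.
move=> H; rewrite /braided_YBE /M4 RI_eq IR_eq; apply/matrixP => p q.
by rewrite !tri H.
Qed.

Lemma ybe_form1 (a d e h : C) : braided_YBE (M4 a 0 0 d e 0 0 h).
Proof.
apply: ybe_conv => p q.
case: p => [[|[|[|[|[|[|[|[|//]]]]]]]] Hp];
case: q => [[|[|[|[|[|[|[|[|//]]]]]]]] Hq]; rewrite /S8 /fn /=; ring.
Qed.

Lemma ybe_form2 (b c g : C) : braided_YBE (M4 0 b c 0 0 c g 0).
Proof.
apply: ybe_conv => p q.
case: p => [[|[|[|[|[|[|[|[|//]]]]]]]] Hp];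
case: q => [[|[|[|[|[|[|[|[|//]]]]]]]] Hq]; rewrite /S8 /fn /=; ring.
Qed.

End S.

Arguments M4 {R}.


Section S5.
Variable R : realType.
Local Notation C := R[i].

Lemma MadjE (A : 'M[C]_4) i j : (A *m adjmx A) i j = \sum_k A i k * (A j k)^*.
Proof. by rewrite mxE; apply: eq_bigr => k _; rewrite !mxE. Qed.
Lemma adjME (A : 'M[C]_4) i j : (adjmx A *m A) i j = \sum_k (A k i)^* * A k j.
Proof. by rewrite mxE; apply: eq_bigr => k _; rewrite !mxE. Qed.

Lemma unit_eqs (a b c d e f g h : C) :
  unitary (M4 a b c d e f g h) ->
  a * a^* + b * b^* = 1 /\ a * g^* + b * h^* = 0 /\ g * g^* + h * h^* = 1 /\
  c * c^* + d * d^* = 1 /\ c * e^* + d * f^* = 0 /\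
  a^* * a + g^* * g = 1 /\ b^* * b + h^* * h = 1 /\ a^* * b + g^* * h = 0 /\
  c^* * c + e^* * e = 1 /\ d^* * d + f^* * f = 1 /\ c^* * d + e^* * f = 0.
Proof.
case=> Hu Hi.
have H1 : M4 a b c d e f g h *m adjmx (M4 a b c d e f g h) = 1%:M by rewrite -Hi mulmxV.
have H2 : adjmx (M4 a b c d e f g h) *m M4 a b c d e f g h = 1%:M by rewrite -Hi mulVmx.
have E1 := fun i j => congr1 (fun X : 'M[C]_4 => X i j) H1.
have E2 := fun i j => congr1 (fun X : 'M[C]_4 => X i j) H2.
rewrite /= in E1 E2.
do !split.
- move: (E1 (@Ordinal 4 0 isT) (@Ordinal 4 0 isT)); rewrite MadjE !big_ord_recl big_ord0 !mxE /= !conjC0.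
  move=> E; apply: (etrans _ E); ring.
- move: (E1 (@Ordinal 4 0 isT) (@Ordinal 4 3 isT)); rewrite MadjE !big_ord_recl big_ord0 !mxE /= !conjC0.
  move=> E; apply: (etrans _ E); ring.
- move: (E1 (@Ordinal 4 3 isT) (@Ordinal 4 3 isT)); rewrite MadjE !big_ord_recl big_ord0 !mxE /= !conjC0.
  move=> E; apply: (etrans _ E); ring.
- move: (E1 (@Ordinal 4 1 isT) (@Ordinal 4 1 isT)); rewrite MadjE !big_ord_recl big_ord0 !mxE /= !conjC0.
  move=> E; apply: (etrans _ E); ring.
- move: (E1 (@Ordinal 4 1 isT) (@Ordinal 4 2 isT)); rewrite MadjE !big_ord_recl big_ord0 !mxE /= !conjC0.
  move=> E; apply: (etrans _ E); ring.
- move: (E2 (@Ordinal 4 0 isT) (@Ordinal 4 0 isT)); rewrite adjME !big_ord_recl big_ord0 !mxE /= !conjC0.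
  move=> E; apply: (etrans _ E); ring.
- move: (E2 (@Ordinal 4 3 isT) (@Ordinal 4 3 isT)); rewrite adjME !big_ord_recl big_ord0 !mxE /= !conjC0.
  move=> E; apply: (etrans _ E); ring.
- move: (E2 (@Ordinal 4 0 isT) (@Ordinal 4 3 isT)); rewrite adjME !big_ord_recl big_ord0 !mxE /= !conjC0.
  move=> E; apply: (etrans _ E); ring.
- move: (E2 (@Ordinal 4 1 isT) (@Ordinal 4 1 isT)); rewrite adjME !big_ord_recl big_ord0 !mxE /= !conjC0.
  move=> E; apply: (etrans _ E); ring.
- move: (E2 (@Ordinal 4 2 isT) (@Ordinal 4 2 isT)); rewrite adjME !big_ord_recl big_ord0 !mxE /= !conjC0.
  move=> E; apply: (etrans _ E); ring.
- move: (E2 (@Ordinal 4 1 isT) (@Ordinal 4 2 isT)); rewrite adjME !big_ord_recl big_ord0 !mxE /= !conjC0.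
  move=> E; apply: (etrans _ E); ring.
Qed.

End S5.


Section S6.
Variable R : realType.
Local Notation C := R[i].

Definition col2 (x y : C) : 'cV[C]_2 := \matrix_(i < 2, j < 1) if (i : nat) == 0%N then x else y.

Lemma col2_eta (u : 'cV[C]_2) : u = col2 (u ord0 ord0) (u (@Ordinal 2 1 isT) ord0).
Proof.
apply/matrixP => i j; rewrite (ord1 j) !mxE.
case: i => [[|[|//]] Hi] /=; congr (u _ _); exact: val_inj.
Qed.

Lemma unent_det (w : 'cV[C]_4) : unentangled w ->
  w (@Ordinal 4 0 isT) ord0 * w (@Ordinal 4 3 isT) ord0 =
  w (@Ordinal 4 1 isT) ord0 * w (@Ordinal 4 2 isT) ord0.
Proof.
case=> u [v ->]; rewrite (col2_eta u) (col2_eta v) !mxE /divn /modn /=; ring.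
Qed.

Lemma ent_of (M : 'M[C]_4) x0 x1 y0 y1 :
  let w := M *m (col2 x0 x1 *t col2 y0 y1) in
  w (@Ordinal 4 0 isT) ord0 * w (@Ordinal 4 3 isT) ord0 !=
  w (@Ordinal 4 1 isT) ord0 * w (@Ordinal 4 2 isT) ord0 -> entangling M.
Proof.
move=> w Hw; exists (col2 x0 x1 *t col2 y0 y1); split; first by exists (col2 x0 x1), (col2 y0 y1).
by move=> /unent_det H; rewrite -/w H eqxx in Hw.
Qed.

Lemma not_ent (M : 'M[C]_4) :
  (forall u0 u1 v0 v1 : C, exists x y : 'cV[C]_2, M *m (col2 u0 u1 *t col2 v0 v1) = x *t y) ->
  ~ entangling M.
Proof.
move=> H [Phi [[u [v ->]] Hent]]; apply: Hent.
rewrite (col2_eta u) (col2_eta v).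
have [x [y ->]] := H (u ord0 ord0) (u (@Ordinal 2 1 isT) ord0) (v ord0 ord0) (v (@Ordinal 2 1 isT) ord0).
by exists x, y.
Qed.

Lemma neq_via (P Q x y : C) : P != Q -> x - y = P - Q -> x != y.
Proof. by move=> H E; apply: contra H => /eqP xy; rewrite -subr_eq0 -E xy subrr. Qed.

Lemma ent_test (a b c d e f g h : C) : a * g != 0 -> entangling (M4 a b c d e f g h).
Proof.
move=> H; apply: (ent_of _ 1 0 1 0).
rewrite /M4 !mxE !big_ord_recl !big_ord0 !mxE /divn /modn /=.
apply: (neq_via _ _ _ _ H); ring.
Qed.


Lemma unitary_of (A : 'M[C]_4) : A *m adjmx A = 1%:M -> unitary A.
Proof.
move=> H; have [Hu _] := mulmx1_unit H; split => //.
by rewrite -[invmx A]mulmx1 -H mulmxA mulVmx // mul1mx.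
Qed.

Lemma cc1 (x : C) : `|x| = 1 -> x * x^* = 1.
Proof. by rewrite -normCK => ->; rewrite expr1n. Qed.

Lemma form1_unitary (a d e h : C) : `|a| = 1 -> `|d| = 1 -> `|e| = 1 -> `|h| = 1 ->
  unitary (M4 a 0 0 d e 0 0 h).
Proof.
move=> /cc1 Ha /cc1 Hd /cc1 He /cc1 Hh; apply: unitary_of; apply/matrixP => i j.
rewrite MadjE !big_ord_recl !big_ord0 !mxE.
case: i => [[|[|[|[|//]]]] Hi]; case: j => [[|[|[|[|//]]]] Hj] /=;
  rewrite ?conjC0 ?(mulr0, mul0r, addr0, add0r) //.
Qed.

Lemma form2_unitary (b c g : C) : `|b| = 1 -> `|c| = 1 -> `|g| = 1 ->
  unitary (M4 0 b c 0 0 c g 0).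
Proof.
move=> /cc1 Hb /cc1 Hc /cc1 Hg; apply: unitary_of; apply/matrixP => i j.
rewrite MadjE !big_ord_recl !big_ord0 !mxE.
case: i => [[|[|[|[|//]]]] Hi]; case: j => [[|[|[|[|//]]]] Hj] /=;
  rewrite ?conjC0 ?(mulr0, mul0r, addr0, add0r) //.
Qed.

Lemma form1_ent (a d e h : C) : `|a| = 1 ->
  entangling (M4 a 0 0 d e 0 0 h) <-> a * h != d * e.
Proof.
move=> /cc1 Ha; split.
- move=> Hent; apply/negP => /eqP Hde; apply: (not_ent _ _ Hent) => u0 u1 v0 v1.
  exists (col2 v0 (e * a^* * v1)), (col2 (a * u0) (d * u1)).
  apply/matrixP => i j; rewrite (ord1 j) /M4 !mxE !big_ord_recl !big_ord0 !mxE /divn /modn.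
  case: i => [[|[|[|[|//]]]] Hi] /=.
  + ring.
  + ring.
  + have E1 : e * a^* * v1 * (a * u0) = e * (u0 * v1) * (a * a^*) by ring.
    rewrite E1 Ha; ring.
  + have E1 : e * a^* * v1 * (d * u1) = a^* * (d * e) * (u1 * v1) by ring.
    have E2 : a^* * (a * h) * (u1 * v1) = (a * a^*) * h * (u1 * v1) by ring.
    rewrite E1 -Hde E2 Ha; ring.
- move=> H; apply: (ent_of _ 1 1 1 1).
  rewrite /M4 !mxE !big_ord_recl !big_ord0 !mxE /divn /modn /=.
  apply: (neq_via _ _ _ _ H); ring.
Qed.

Lemma form2_ent (b c g : C) : `|b| = 1 ->
  entangling (M4 0 b c 0 0 c g 0) <-> b * g != c ^+ 2.
Proof.
move=> /cc1 Hb; split.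
- move=> Hent; apply/negP => /eqP Hbg; apply: (not_ent _ _ Hent) => u0 u1 v0 v1.
  exists (col2 v1 (c * b^* * v0)), (col2 (b * u1) (c * u0)).
  apply/matrixP => i j; rewrite (ord1 j) /M4 !mxE !big_ord_recl !big_ord0 !mxE /divn /modn.
  case: i => [[|[|[|[|//]]]] Hi] /=.
  + ring.
  + ring.
  + have E1 : c * b^* * v0 * (b * u1) = c * (u1 * v0) * (b * b^*) by ring.
    rewrite E1 Hb; ring.
  + have E1 : c * b^* * v0 * (c * u0) = b^* * c ^+ 2 * (u0 * v0) by ring.
    have E2 : b^* * (b * g) * (u0 * v0) = (b * b^*) * g * (u0 * v0) by ring.
    rewrite E1 -Hbg E2 Hb; ring.
- move=> H; apply: (ent_of _ 1 1 1 1).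
  rewrite /M4 !mxE !big_ord_recl !big_ord0 !mxE /divn /modn /=.
  apply: (neq_via _ _ _ _ H); ring.
Qed.

Lemma scalar_not_ent (c : C) : ~ entangling (M4 c 0 c 0 0 c 0 c).
Proof.
apply: not_ent => u0 u1 v0 v1.
exists (col2 (c * u0) (c * u1)), (col2 v0 v1).
apply/matrixP => i j; rewrite (ord1 j) /M4 !mxE !big_ord_recl !big_ord0 !mxE /divn /modn.
case: i => [[|[|[|[|//]]]] Hi] /=; ring.
Qed.
End S6.


Arguments unit_eqs {R a b c d e f g h}.
Arguments ybe_eqs {R a b c d e f g h}.
Section S7.
Variable R : realType.
Local Notation C := R[i].

Lemma comb1 (X E1 k1 : C) : E1 = 0 -> X = k1 * E1 -> X = 0.
Proof. by move=> -> ->; rewrite mulr0. Qed.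
Lemma comb2 (X E1 E2 k1 k2 : C) : E1 = 0 -> E2 = 0 -> X = k1 * E1 + k2 * E2 -> X = 0.
Proof. by move=> -> -> ->; rewrite !mulr0 addr0. Qed.
Lemma ceq2 (X Y E1 E2 k1 k2 : C) : E1 = 0 -> E2 = 0 -> X - Y = k1 * E1 + k2 * E2 -> X = Y.
Proof. by move=> -> -> E; apply/eqP; rewrite -subr_eq0 E !mulr0 addr0. Qed.
Lemma mulfI0 (x y : C) : x != 0 -> x * y = 0 -> y = 0.
Proof. by move=> xn0 /eqP; rewrite mulf_eq0 (negbTE xn0) /= => /eqP. Qed.
Lemma mulfI0r (x y : C) : y != 0 -> x * y = 0 -> x = 0.
Proof. by move=> yn0 /eqP; rewrite mulf_eq0 (negbTE yn0) orbF => /eqP. Qed.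
Lemma cc_n0 (x : C) : x * x^* = 1 -> x != 0.
Proof. by move=> H; apply/eqP => x0; move: H; rewrite x0 mul0r => /eqP; rewrite eq_sym oner_eq0. Qed.
Lemma cc_n0' (x : C) : x^* * x = 1 -> x != 0.
Proof. by rewrite mulrC; exact: cc_n0. Qed.
Lemma conj_n0 (x : C) : x != 0 -> x^* != 0.
Proof. by rewrite conjC_eq0. Qed.
Lemma cc_norm1 (x : C) : x * x^* = 1 -> `|x| = 1.
Proof. by move=> H; apply/eqP; rewrite -sqrp_eq1 ?normr_ge0 // normCK H. Qed.
Lemma cc_normh (x : C) : x * x^* = 2^-1 -> `|x| = (sqrtC 2)^-1.
Proof.
move=> H; apply/eqP; rewrite -(@eqrXn2 _ 2) ?normr_ge0 ?invr_ge0 ?sqrtC_ge0 ?ler0n //.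
by rewrite normCK H exprVn sqrtCK.
Qed.
Lemma sq0 (x : C) : x ^+ 2 = 0 -> x = 0.
Proof. by move/eqP; rewrite expf_eq0 /= => /eqP. Qed.
Lemma two_n0 : (2 : C) != 0.
Proof. by rewrite pnatr_eq0. Qed.


Lemma classify (a b c d e f g h : C) :
  unitary (M4 a b c d e f g h) -> braided_YBE (M4 a b c d e f g h) ->
  entangling (M4 a b c d e f g h) ->
     (M4 a b c d e f g h = mx4 [:: a; 0; 0; 0] [:: 0; 0; d; 0] [:: 0; e; 0; 0] [:: 0; 0; 0; h] /\
      `|a| = 1 /\ `|d| = 1 /\ `|e| = 1 /\ `|h| = 1)
     \/
     (M4 a b c d e f g h = mx4 [:: 0; 0; 0; b] [:: 0; c; 0; 0] [:: 0; 0; c; 0] [:: g; 0; 0; 0] /\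
      `|b| = 1 /\ `|c| = 1 /\ `|g| = 1)
     \/
     (exists s : R[i], (s = 1 \/ s = -1) /\
      M4 a b c d e f g h = mx4 [:: a; 0; 0; b] [:: 0; a; s * a; 0] [:: 0; - s * a; a; 0] [:: g; 0; 0; a] /\
      b * g = - a ^+ 2 /\
      `|a| = (sqrtC 2)^-1 /\ `|b| = (sqrtC 2)^-1 /\ `|g| = (sqrtC 2)^-1)
     \/
     (M4 a b c d e f g h = mx4 [:: a; 0; 0; b] [:: 0; c; d; 0] [:: 0; d; c; 0] [:: g; 0; 0; h] /\
      (a != 0 /\ b != 0 /\ c != 0 /\ d != 0 /\ g != 0 /\ h != 0) /\
      a ^+ 2 - d ^+ 2 = d ^+ 2 - h ^+ 2 /\ d ^+ 2 - h ^+ 2 = a * c - h * c /\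
      a ^+ 2 + h ^+ 2 = 2 * d ^+ 2 /\ b * g = c ^+ 2 /\
      a * a^* + b * b^* = 1 /\ c * c^* + d * d^* = 1 /\ g * g^* + h * h^* = 1 /\
      a * g^* + b * h^* = 0 /\ c * d^* + d * c^* = 0).
Proof.
move=> U Y Ent.
move: (unit_eqs U) => [r00 [r03 [r33 [r11 [r12 [c00 [c33 [c03 [c11 [c22 c12]]]]]]]]]].
move: (ybe_eqs Y) => [y00 [y03 [y11 [y12 [y17 [y21 [y22 y33]]]]]]].
have [bg0|bgn0] := boolP ((b == 0) || (g == 0)).
- have [b0 g0] : b = 0 /\ g = 0.
    case/orP: bg0 => /eqP H0; subst.
    + have hn0 : h != 0 by apply: cc_n0'; rewrite -c33 conjC0 mulr0 add0r.
      split => //; apply/eqP; rewrite -conjC_eq0; apply/eqP.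
      by apply: (mulfI0r _ _ hn0); rewrite -c03 mulr0 add0r.
    + have hn0 : h != 0 by apply: cc_n0; rewrite -r33 mul0r add0r.
      split => //; apply: (mulfI0r _ _ (conj_n0 _ hn0)).
      by rewrite -r03 conjC0 mulr0 add0r.
  subst b g.
  have an0 : a != 0 by apply: cc_n0; rewrite -r00 mul0r addr0.
  have hn0 : h != 0 by apply: cc_n0; rewrite -r33 mul0r add0r.
  have [c0|cn0] := eqVneq c 0.
  + subst c.
    have ee : e * e^* = 1 by rewrite mulrC -c11 conjC0 mul0r add0r.
    have f0 : f = 0.
      apply: (mulfI0 _ _ (conj_n0 _ (cc_n0 _ ee))).
      by rewrite -c12 conjC0 mul0r add0r.
    subst f.
    left; split; first by [].
    split; first by apply: cc_norm1; rewrite -r00 mul0r addr0.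
    split; first by apply: cc_norm1; rewrite -r11 mul0r add0r.
    split; first by apply: cc_norm1.
    by apply: cc_norm1; rewrite -r33 mul0r add0r.
  + exfalso.
    have df : d * f = 0 by apply: (mulfI0 _ _ cn0); apply: (comb1 _ _ (-1) y12); ring.
    have ef : e * f = 0 by apply: (mulfI0 _ _ cn0); apply: (comb1 _ _ (-1) y21); ring.
    have fn0 : f != 0.
      apply/eqP => f0; subst f.
      have d0 : d = 0.
        by apply: (mulfI0 _ _ (conj_n0 _ cn0)); rewrite -c12 mulr0 addr0.
      subst d; move: c22; rewrite conjC0 !mul0r addr0 => /eqP; by rewrite eq_sym oner_eq0.
    have d0 := mulfI0r _ _ fn0 df; have e0 := mulfI0r _ _ fn0 ef; subst d e.
    have ac : a = c.
      apply: subr0_eq; apply: (mulfI0 _ _ cn0); apply: (mulfI0 _ _ an0).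
      apply: (comb1 _ _ 1 y11); ring.
    have hc : c = h.
      apply: subr0_eq; apply: (mulfI0 _ _ cn0); apply: (mulfI0 _ _ hn0).
      apply: (comb1 _ _ 1 y33); ring.
    have fn : c = f.
      apply: subr0_eq; apply: (mulfI0 _ _ cn0); apply: (mulfI0 _ _ fn0).
      apply: (comb1 _ _ 1 y22); ring.
    subst a h f; exact: (@scalar_not_ent _ _ Ent).
- move: bgn0; rewrite negb_or => /andP [bn0 gn0].
  have fc : f = c.
    apply: subr0_eq; apply: (mulfI0 _ _ bn0); apply: (mulfI0 _ _ gn0).
    apply: (comb1 _ _ 1 y00); ring.
  subst f.
  have K : (d - e) * (c ^+ 2 + b * g) = 0 by apply: (comb2 _ _ _ (-1) 1 y12 y21); ring.
  have [de|dne] := eqVneq d e.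
  + subst e.
    have K2 : d * (b * g - c ^+ 2) = 0 by apply: (comb1 _ _ 1 y12); ring.
    have [d0|dn0] := eqVneq d 0.
    * subst d.
      have q1 : - (c * h) + a * c - a ^+ 2 = 0.
        by apply: (mulfI0 _ _ bn0); apply: (comb1 _ _ 1 y03); ring.
      have q2 : h ^+ 2 - c * h + a * c = 0.
        by apply: (mulfI0 _ _ bn0); apply: (comb1 _ _ 1 y17); ring.
      have [a0|an0] := eqVneq a 0.
      -- subst a.
         have h0 : h = 0 by apply: sq0; apply: (comb2 _ _ _ 1 (-1) q2 q1); ring.
         subst h; right; left; split; first by [].
         split; first by apply: cc_norm1; rewrite -r00 mul0r add0r.
         split; first by apply: cc_norm1; rewrite -r11 mul0r addr0.
         by apply: cc_norm1; rewrite -r33 mul0r addr0.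
      -- exfalso.
         have sq : (h - 'i * a) * (h + 'i * a) = 0.
           have E : (h - 'i * a) * (h + 'i * a) = h ^+ 2 - 'i ^+ 2 * a ^+ 2 by ring.
           rewrite E sqrCi; apply: (comb2 _ _ _ 1 (-1) q2 q1); ring.
         have [w [hw w2]] : exists w, h = w * a /\ (1 - w) * (1 - w)^* = 2.
           move/eqP: sq; rewrite mulf_eq0 => /orP [] /eqP H.
           - exists 'i; split; first exact: subr0_eq.
             rewrite rmorphB /= rmorph1 conjCi.
             have E : (1 - 'i) * (1 - - 'i) = 1 - 'i ^+ 2 :> C by ring.
             rewrite E sqrCi; ring.
           - exists (- 'i); split.
               by rewrite mulNr; apply: subr0_eq; rewrite opprK.
             rewrite rmorphB /= rmorph1 rmorphN /= conjCi.
             have E : (1 - - 'i) * (1 - - - 'i) = 1 - 'i ^+ 2 :> C by ring.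
             rewrite E sqrCi; ring.
         subst h.
         have ac1 : c * (1 - w) = a.
           apply: subr0_eq; apply: (mulfI0 _ _ an0); apply: (comb1 _ _ 1 q1); ring.
         have cc : c * c^* = 1 by rewrite -r11 mul0r addr0.
         have aa2 : a * a^* = 2.
           rewrite -ac1 rmorphM /=.
           have E : c * (1 - w) * (c^* * (1 - w)^*) = (c * c^*) * ((1 - w) * (1 - w)^*) by ring.
           by rewrite E cc w2 mul1r.
         have bb : b * b^* = -1.
           have E : b * b^* = 1 - a * a^* by rewrite -r00; ring.
           by rewrite E aa2; ring.
         by move: (mul_conjC_ge0 b); rewrite bb ler0N1.
    * have bgc : b * g = c ^+ 2 by apply: subr0_eq; exact: (mulfI0 _ _ dn0 K2).
      have cn0 : c != 0.
        apply/eqP => c0; have : b * g != 0 by rewrite mulf_neq0.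
        by rewrite bgc c0 expr2 mulr0 eqxx.
      have p1 : d ^+ 2 - c * h + a * c - a ^+ 2 = 0.
        by apply: (mulfI0 _ _ bn0); apply: (comb1 _ _ 1 y03); ring.
      have p2 : h ^+ 2 - d ^+ 2 - c * h + a * c = 0.
        by apply: (mulfI0 _ _ bn0); apply: (comb1 _ _ 1 y17); ring.
      have an0 : a != 0.
        apply/eqP => a0; subst a.
        have h0 : h = 0.
          by apply: (mulfI0 _ _ (conj_n0 _ gn0)); rewrite -c03 conjC0 mul0r add0r.
        subst h.
        have d0 : d = 0 by apply: sq0; apply: (comb1 _ _ 1 p1); ring.
        by move: dn0; rewrite d0 eqxx.
      have hn0 : h != 0.
        apply/eqP => h0; subst h.
        have a0 : a = 0.
          by apply: (mulfI0r _ _ (conj_n0 _ gn0)); rewrite -r03 conjC0 mulr0 addr0.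
        by move: an0; rewrite a0 eqxx.
      right; right; right; split; first by [].
      do !split => //.
      -- by apply: (ceq2 _ _ _ _ (-1) 1 p1 p2); ring.
      -- by apply: (ceq2 _ _ _ _ (-1) 0 p2 p1); ring.
      -- by apply: (ceq2 _ _ _ _ (-1) 1 p1 p2); ring.
  + have K3 : c ^+ 2 + b * g = 0.
      by apply: (mulfI0 _ _ _ K); rewrite subr_eq0.
    have cn0 : c != 0.
      apply/eqP => c0; have : b * g != 0 by rewrite mulf_neq0.
      by move: K3; rewrite c0 expr2 mulr0 add0r => ->; rewrite eqxx.
    have c2n0 : c ^+ 2 != 0 by rewrite expf_neq0.
    have ed : e = - d.
      apply/eqP; rewrite -addr_eq0 addrC; apply/eqP.
      apply: (mulfI0 _ _ c2n0); apply: (comb2 _ _ _ (-1) e y12 K3); ring.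
    subst e.
    have Q3 : d ^+ 2 - c * h - a * c + a ^+ 2 = 0.
      by apply: (mulfI0 _ _ cn0); apply: (comb2 _ _ _ 1 (- h) y11 K3); ring.
    have Q4 : d ^+ 2 - c * h + a * c - a ^+ 2 = 0.
      by apply: (mulfI0 _ _ bn0); apply: (comb1 _ _ 1 y03); ring.
    have Q5 : - h ^+ 2 - d ^+ 2 + c * h + a * c = 0.
      by apply: (mulfI0 _ _ cn0); apply: (comb2 _ _ _ 1 a y33 K3); ring.
    have Q6 : h ^+ 2 - d ^+ 2 - c * h + a * c = 0.
      by apply: (mulfI0 _ _ bn0); apply: (comb1 _ _ 1 y17); ring.
    have aac : a * (a - c) = 0.
      by apply: (mulfI0 _ _ two_n0); apply: (comb2 _ _ _ 1 (-1) Q3 Q4); ring.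
    have dac : d ^+ 2 - a * c = 0.
      by apply: (mulfI0 _ _ two_n0); apply: (comb2 _ _ _ (-1) (-1) Q5 Q6); ring.
    have hhc : h * (h - c) = 0.
      by apply: (mulfI0 _ _ two_n0); apply: (comb2 _ _ _ (-1) 1 Q5 Q6); ring.
    have an0 : a != 0.
      apply/eqP => a0; subst a.
      have d0 : d = 0 by apply: sq0; apply: (comb1 _ _ 1 dac); ring.
      by move: dne; rewrite d0 oppr0 eqxx.
    have ca : a = c by apply: subr0_eq; exact: (mulfI0 _ _ an0 aac).
    subst c.
    have hn0 : h != 0.
      apply/eqP => h0; subst h.
      have d0 : d = 0 by apply: sq0; apply: (comb1 _ _ 1 Q4); ring.
      by move: dne; rewrite d0 oppr0 eqxx.
    have ha : h = a by apply: subr0_eq; exact: (mulfI0 _ _ hn0 hhc).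
    subst h.
    have dd : (d - a) * (d + a) = 0 by apply: (comb1 _ _ 1 dac); ring.
    have bg : b * g = - a ^+ 2.
      by apply/eqP; rewrite -addr_eq0 addrC; apply/eqP.
    have fin : d * d^* = a * a^* -> 
      `|a| = (sqrtC 2)^-1 /\ `|b| = (sqrtC 2)^-1 /\ `|g| = (sqrtC 2)^-1.
      move=> Hd.
      have H2 : 2 * (a * a^*) = 1 by rewrite -[RHS]r11 Hd; ring.
      have aa : a * a^* = 2^-1 by rewrite -[LHS](mulKf two_n0) H2 mulr1.
      have hh : 1 - (2 : C)^-1 = 2^-1.
        by apply: (mulfI two_n0); rewrite mulrBr mulr1 mulfV ?two_n0 //; ring.
      split; first exact: cc_normh.
      split; first by apply: cc_normh; rewrite -hh -aa -[X in X - _]r00; ring.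
      by apply: cc_normh; rewrite -hh -aa -[X in X - _]r33; ring.
    right; right; left.
    move/eqP: dd; rewrite mulf_eq0 => /orP [] /eqP H.
    * have da : d = a by exact: subr0_eq.
      subst d; exists 1; split; first by left.
      split; first by rewrite /M4 mul1r mulN1r.
      by split => //; apply: fin.
    * have da : d = - a by apply/eqP; rewrite -addr_eq0; apply/eqP.
      subst d; exists (-1); split; first by right.
      split; first by rewrite /M4 ?mulN1r ?opprK ?mul1r.
      split => //; apply: fin; rewrite rmorphN /=; ring.
Qed.
End S7.

Theorem mainTheorem2 (R : realType) :
  (* classification *)
  (forall a b c d e f g h : R[i],
     let M := mx4 [:: a; 0; 0; b] [:: 0; c; d; 0] [:: 0; e; f; 0] [:: g; 0; 0; h] in
     unitary M -> braided_YBE M -> entangling M ->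
     (* form 1 *)
     (M = mx4 [:: a; 0; 0; 0] [:: 0; 0; d; 0] [:: 0; e; 0; 0] [:: 0; 0; 0; h] /\
      `|a| = 1 /\ `|d| = 1 /\ `|e| = 1 /\ `|h| = 1)
     \/
     (* form 2 *)
     (M = mx4 [:: 0; 0; 0; b] [:: 0; c; 0; 0] [:: 0; 0; c; 0] [:: g; 0; 0; 0] /\
      `|b| = 1 /\ `|c| = 1 /\ `|g| = 1)
     \/
     (* form 3 *)
     (exists s : R[i], (s = 1 \/ s = -1) /\
      M = mx4 [:: a; 0; 0; b] [:: 0; a; s * a; 0] [:: 0; - s * a; a; 0] [:: g; 0; 0; a] /\
      b * g = - a ^+ 2 /\
      `|a| = (sqrtC 2)^-1 /\ `|b| = (sqrtC 2)^-1 /\ `|g| = (sqrtC 2)^-1)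
     \/
     (* form 4 *)
     (M = mx4 [:: a; 0; 0; b] [:: 0; c; d; 0] [:: 0; d; c; 0] [:: g; 0; 0; h] /\
      (a != 0 /\ b != 0 /\ c != 0 /\ d != 0 /\ g != 0 /\ h != 0) /\
      a ^+ 2 - d ^+ 2 = d ^+ 2 - h ^+ 2 /\ d ^+ 2 - h ^+ 2 = a * c - h * c /\
      a ^+ 2 + h ^+ 2 = 2 * d ^+ 2 /\ b * g = c ^+ 2 /\
      a * a^* + b * b^* = 1 /\ c * c^* + d * d^* = 1 /\ g * g^* + h * h^* = 1 /\
      a * g^* + b * h^* = 0 /\ c * d^* + d * c^* = 0))
  /\
  (* form 1 matrices: unitary YBE solutions, entangling iff ah <> de *)
  (forall a d e h : R[i],
     `|a| = 1 -> `|d| = 1 -> `|e| = 1 -> `|h| = 1 ->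
     let M := mx4 [:: a; 0; 0; 0] [:: 0; 0; d; 0] [:: 0; e; 0; 0] [:: 0; 0; 0; h] in
     unitary M /\ braided_YBE M /\ (entangling M <-> a * h != d * e))
  /\
  (* form 2 matrices: unitary YBE solutions, entangling iff bg <> c^2 *)
  (forall b c g : R[i],
     `|b| = 1 -> `|c| = 1 -> `|g| = 1 ->
     let M := mx4 [:: 0; 0; 0; b] [:: 0; c; 0; 0] [:: 0; 0; c; 0] [:: g; 0; 0; 0] in
     unitary M /\ braided_YBE M /\ (entangling M <-> b * g != c ^+ 2))
  /\
  (* form 3 matrices are always entangling *)
  (forall a b g s : R[i], (s = 1 \/ s = -1) ->
     b * g = - a ^+ 2 ->
     `|a| = (sqrtC 2)^-1 -> `|b| = (sqrtC 2)^-1 -> `|g| = (sqrtC 2)^-1 ->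
     entangling (mx4 [:: a; 0; 0; b] [:: 0; a; s * a; 0] [:: 0; - s * a; a; 0] [:: g; 0; 0; a]))
  /\
  (* form 4 matrices are always entangling *)
  (forall a b c d g h : R[i],
     (a != 0 /\ b != 0 /\ c != 0 /\ d != 0 /\ g != 0 /\ h != 0) ->
     a ^+ 2 - d ^+ 2 = d ^+ 2 - h ^+ 2 -> d ^+ 2 - h ^+ 2 = a * c - h * c ->
     a ^+ 2 + h ^+ 2 = 2 * d ^+ 2 -> b * g = c ^+ 2 ->
     a * a^* + b * b^* = 1 -> c * c^* + d * d^* = 1 -> g * g^* + h * h^* = 1 ->
     a * g^* + b * h^* = 0 -> c * d^* + d * c^* = 0 ->
     entangling (mx4 [:: a; 0; 0; b] [:: 0; c; d; 0] [:: 0; d; c; 0] [:: g; 0; 0; h])).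

Proof.
have nz : forall x : R[i], `|x| = (sqrtC 2)^-1 -> x != 0.
  move=> x Hx; apply/eqP => x0; move: Hx; rewrite x0 normr0 => /esym /eqP.
  by rewrite invr_eq0 sqrtC_eq0 pnatr_eq0.
split.
  move=> a b c d e f g h M U Y Ent.
  exact: (@classify R a b c d e f g h U Y Ent).
split.
  move=> a d e h Ha Hd He Hh M.
  split; first exact: (@form1_unitary R a d e h Ha Hd He Hh).
  split; first exact: (@ybe_form1 R a d e h).
  exact: (@form1_ent R a d e h Ha).
split.
  move=> b c g Hb Hc Hg M.
  split; first exact: (@form2_unitary R b c g Hb Hc Hg).
  split; first exact: (@ybe_form2 R b c g).
  exact: (@form2_ent R b c g Hb).
split.
  move=> a b g s Hs Hbg Ha Hb Hg.
  apply: (@ent_test R a b a (s * a) (- s * a) a g a).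
  by rewrite mulf_neq0 ?nz.
move=> a b c d g h [an0 [bn0 [cn0 [dn0 [gn0 hn0]]]]] *.
apply: (@ent_test R a b c d d c g h).
by rewrite mulf_neq0.
Qed.
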